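(* Let $A=(0,0)$, $B=(1,0)$, $C=(1,1)$, $D=(0,1)$ be the vertices of the unit square in $\mathbb{R}^2$. There is no point $P$ lying on a midline of this square, that is, no point of the form $P=(1/2,\,y)$ with $0\le y\le 1$ or $P=(x,\,1/2)$ with $0\le x\le 1$, such that the four Euclidean distances $|PA|$, $|PB|$, $|PC|$, $|PD|$ are all rational numbers.
   Context: The midlines of the square are the segments joining midpoints of opposite sides. Distances are ordinary Euclidean distances. *)

(* Defs.v *)
From Stdlib Require Import Reals QArith Qreals.
Open Scope R_scope.

Definition is_rational (r : R) : Prop := exists q : Q, Q2R q = r.

Definition dist2 (p q : R * R) : R :=
  sqrt ((fst p - fst q) ^ 2 + (snd p - snd q) ^ 2).

Definition on_midline (P : R * R) : Prop :=
  (fst P = 1/2 /\ 0 <= snd P <= 1) \/ (snd P = 1/2 /\ 0 <= fst P <= 1).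

(* Main.v *)
Require Import Defs.
From Stdlib Require Import Reals QArith Qreals.
From Stdlib Require Import ZArith Znumtheory Lia Lra.
Open Scope R_scope.
Local Open Scope Z_scope.

Lemma gcd1_div a b g : Z.gcd a b = 1 -> (g | a) -> (g | b) -> (g | 1).
Proof. intros H Ha Hb. rewrite <- H. apply Z.gcd_greatest; auto. Qed.

Lemma gcd1_intro a b : (forall g, (g | a) -> (g | b) -> (g | 1)) -> Z.gcd a b = 1.
Proof.
  intros H. pose proof (H _ (Z.gcd_divide_l a b) (Z.gcd_divide_r a b)) as H1.
  apply Z.divide_1_r in H1. pose proof (Z.gcd_nonneg a b). lia.
Qed.

Lemma gcd1_sym a b : Z.gcd a b = 1 -> Z.gcd b a = 1.
Proof. rewrite Z.gcd_comm. auto. Qed.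

Lemma gcd1_mul a b c : Z.gcd a c = 1 -> Z.gcd b c = 1 -> Z.gcd (a*b) c = 1.
Proof.
  intros H1 H2. apply gcd1_sym. apply Zgcd_1_rel_prime.
  apply rel_prime_mult; apply Zgcd_1_rel_prime; apply gcd1_sym; auto.
Qed.

Lemma gcd1_mul_r a b c : Z.gcd a b = 1 -> Z.gcd a c = 1 -> Z.gcd a (b*c) = 1.
Proof. intros; apply gcd1_sym, gcd1_mul; apply gcd1_sym; auto. Qed.

Lemma gcd_div_coprime a b d a' b' : d = Z.gcd a b -> d <> 0 -> a = a' * d -> b = b' * d ->
  Z.gcd a' b' = 1.
Proof.
  intros Hd Hd0 Ha Hb. apply gcd1_intro. intros g Hg1 Hg2.
  assert (H: (g * d | d)).
  { rewrite Hd at 2. apply Z.gcd_greatest.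
    - rewrite Ha. apply Z.mul_divide_mono_r; auto.
    - rewrite Hb. apply Z.mul_divide_mono_r; auto. }
  rewrite <- (Z.mul_1_l d) in H at 2. apply Z.mul_divide_cancel_r in H; auto.
Qed.

Lemma sq_of_coprime a b c : 0 <= a -> 0 <= b -> Z.gcd a b = 1 -> a * b = c * c ->
  exists d, 0 <= d /\ a = d * d.
Proof.
  intros Ha Hb Hab Habc.
  destruct (Z.eq_dec a 0) as [->|Ha0]. { exists 0; lia. }
  set (d := Z.gcd a c).
  assert (Hd0 : d <> 0) by (intro E; apply Ha0; eapply Z.gcd_eq_0_l; eauto).
  assert (Hdp : 0 < d) by (pose proof (Z.gcd_nonneg a c); unfold d in *; lia).
  destruct (Z.gcd_divide_l a c) as [a' Ha'].
  destruct (Z.gcd_divide_r a c) as [c' Hc'].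
  fold d in Ha', Hc'.
  assert (Hcop : Z.gcd a' c' = 1) by (eapply gcd_div_coprime; eauto).
  assert (E : a' * b = d * (c' * c')).
  { apply (Z.mul_reg_r _ _ d); auto. rewrite Ha', Hc' in Habc. transitivity (a'*d*b); [ring|]. rewrite Habc; ring. }
  assert (H1 : (a' | d)).
  { apply (Z.gauss _ (c'*c')). exists b. lia. apply gcd1_mul_r; auto. }
  assert (Hdb : Z.gcd d b = 1).
  { apply gcd1_intro. intros g Hg1 Hg2. apply (gcd1_div a b); auto.
    apply (Z.divide_trans _ d); auto. exists a'; exact Ha'. }
  assert (H2 : (d | a')).
  { apply (Z.gauss _ b). exists (c'*c'). lia. auto. }
  assert (0 <= a') by nia.
  assert (a' = d) by (apply Z.divide_antisym_nonneg; auto; lia).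
  exists d; split; [lia|]. rewrite Ha'. subst a'. ring.
Qed.

Lemma sq_div a b : 0 < a -> (a * a | b * b) -> (a | b).
Proof.
  intros Ha H.
  set (d := Z.gcd a b).
  assert (Hd0 : d <> 0) by (intro E; apply Z.gcd_eq_0_l in E; lia).
  assert (Hdp : 0 < d) by (pose proof (Z.gcd_nonneg a b); unfold d in *; lia).
  destruct (Z.gcd_divide_l a b) as [a' Ha'].
  destruct (Z.gcd_divide_r a b) as [b' Hb'].
  fold d in Ha', Hb'.
  assert (Hcop : Z.gcd a' b' = 1) by (eapply gcd_div_coprime; eauto).
  assert (H2 : (a' * a' | b' * b')).
  { apply (Z.mul_divide_cancel_r _ _ (d*d)). nia.
    replace (a'*a'*(d*d)) with (a*a) by (rewrite Ha'; ring).
    replace (b'*b'*(d*d)) with (b*b) by (rewrite Hb'; ring). auto. }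
  assert (H3 : (a' * a' | 1)).
  { apply (gcd1_div (a'*a') (b'*b')); auto. apply gcd1_mul; apply gcd1_mul_r; auto.
    apply Z.divide_refl. }
  assert (H4 : (a' | 1)) by (eapply Z.divide_trans; [exists a'; reflexivity| exact H3]).
  apply Z.divide_1_r in H4.
  assert (a' = 1) by nia. subst a'. rewrite Ha'. rewrite Z.mul_1_l. unfold d. apply Z.gcd_divide_r.
Qed.

Lemma sq_inj a b : 0 <= a -> 0 <= b -> a * a = b * b -> a = b.
Proof. intros. nia. Qed.

Lemma even_sq z : Z.Even (z * z) -> Z.Even z.
Proof.
  intros [k Hk]. destruct (Z.Even_or_Odd z) as [H|[m Hm]]; auto. subst. lia.
Qed.

Lemma odd_sq z : Z.Odd (z * z) -> Z.Odd z.
Proof.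
  intros [k Hk]. destruct (Z.Even_or_Odd z) as [[m Hm]|H]; auto. subst. lia.
Qed.
Lemma par1 i j m : (2*i+1)*(2*i+1) + (2*j+1)*(2*j+1) = m*m -> False.
Proof. intros H. destruct (Z.Even_or_Odd m) as [[k Hk]|[k Hk]]; subst; lia. Qed.
Lemma par2 i j k : (2*i+1)*(2*i+1) + (2*j)*(2*j) = (2*k)*(2*k) -> False.
Proof. intros; lia. Qed.
Lemma par3 i j c : (2*i+1)*(2*j+1) = 2*c -> False.
Proof. intros; lia. Qed.

Definition sol x y z := 0 < x /\ 0 < y /\ 0 <= z /\ x*x*(x*x) + 4*(y*y*(y*y)) = z*z.

Lemma step_odd x y z : sol x y z -> Z.gcd x y = 1 -> Z.Odd x ->
  exists x' y' z', sol x' y' z' /\ z' < z.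
Proof.
  intros [Hx [Hy [Hz E]]] Hg [xx Hxx].
  assert (Hzo : Z.Odd z).
  { destruct (Z.Even_or_Odd z) as [[k Hk]|]; auto. exfalso.
    assert (Z.Even x). { apply even_sq, even_sq. exists (2*k*k - 2*(y*y*(y*y))). subst z. lia. }
    destruct H as [m Hm]. lia. }
  destruct Hzo as [zz Hzz].
  assert (Hlt : x*x < z) by nia.
  set (w := 2*xx*xx + 2*xx).
  assert (Hw : x*x = 2*w+1) by (unfold w; subst x; ring).
  set (P := zz + w + 1). set (Q := zz - w).
  assert (HPQ : P*Q = (y*y)*(y*y)).
  { apply (Z.mul_reg_l _ _ 4); [lia|].
    replace (4*(P*Q)) with (z*z - (x*x)*(x*x)) by (unfold P, Q; rewrite Hw, Hzz; ring). lia. }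
  assert (HQ : 0 < Q) by (unfold Q; lia).
  assert (HP : 0 < P) by (unfold P; lia).
  assert (Hxy2 : Z.gcd (x*x) (y*y*(y*y)) = 1).
  { apply gcd1_mul; apply gcd1_mul_r; apply gcd1_mul_r; auto. }
  assert (HgPQ : Z.gcd P Q = 1).
  { apply gcd1_intro. intros g H1 H2. apply (gcd1_div _ _ _ Hxy2).
    - rewrite Hw. replace (2*w+1) with (P - Q) by (unfold P, Q; ring). apply Z.divide_sub_r; auto.
    - rewrite <- HPQ. apply Z.divide_mul_l; auto. }
  destruct (sq_of_coprime P Q (y*y) ltac:(lia) ltac:(lia) HgPQ HPQ) as [m [Hm0 Hm]].
  destruct (sq_of_coprime Q P (y*y) ltac:(lia) ltac:(lia) (gcd1_sym _ _ HgPQ)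
     ltac:(rewrite Z.mul_comm; exact HPQ)) as [n [Hn0 Hn]].
  assert (Hmn : y*y = m*n).
  { apply sq_inj. apply Z.square_nonneg. apply Z.mul_nonneg_nonneg; auto.
    rewrite <- HPQ, Hm, Hn. ring. }
  assert (Hgmn : Z.gcd m n = 1).
  { apply gcd1_intro. intros g H1 H2. apply (gcd1_div _ _ _ HgPQ).
    rewrite Hm; apply Z.divide_mul_l; auto. rewrite Hn; apply Z.divide_mul_l; auto. }
  assert (Hm1 : 0 < m) by (destruct (Z.eq_dec m 0); subst; lia).
  assert (Hn1 : 0 < n) by (destruct (Z.eq_dec n 0); subst; lia).
  destruct (sq_of_coprime m n y ltac:(lia) ltac:(lia) Hgmn ltac:(lia)) as [a [Ha0 Ha]].
  destruct (sq_of_coprime n m y ltac:(lia) ltac:(lia) (gcd1_sym _ _ Hgmn) ltac:(lia)) as [b [Hb0 Hb]].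
  assert (Hpy : x*x + n*n = m*m).
  { rewrite <- Hm, <- Hn. rewrite Hw. unfold P, Q. ring. }
  assert (Hne : Z.Even n).
  { destruct (Z.Even_or_Odd n) as [|[j Hj]]; auto. exfalso.
    apply (par1 xx j m). rewrite <- Hxx, <- Hj. exact Hpy. }
  assert (Hmo : Z.Odd m).
  { destruct (Z.Even_or_Odd m) as [[k Hk]|]; auto. exfalso.
    destruct Hne as [j Hj]. apply (par2 xx j k). rewrite <- Hxx, <- Hj, <- Hk. exact Hpy. }
  assert (Hbe : Z.Even b) by (apply even_sq; rewrite <- Hb; auto).
  destruct Hbe as [c Hc].
  destruct Hmo as [mm Hmm].
  set (R := mm + xx + 1). set (S := mm - xx).
  assert (HRS : R*S = (2*(c*c))*(2*(c*c))).
  { apply (Z.mul_reg_l _ _ 4); [lia|].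
    replace (4*(R*S)) with (m*m - x*x) by (unfold R, S; rewrite Hmm, Hxx; ring).
    replace (4*(2*(c*c)*(2*(c*c)))) with (n*n) by (rewrite Hb, Hc; ring). lia. }
  assert (Hxm : x < m).
  { destruct (Z_lt_le_dec x m) as [|Hle]; auto. exfalso.
    assert (m*m <= x*x) by (apply Z.mul_le_mono_nonneg; lia).
    assert (0 < n*n) by (apply Z.mul_pos_pos; lia). lia. }
  assert (HS : 0 < S) by (unfold S; lia).
  assert (HR : 0 < R) by (unfold R; lia).
  assert (Hmn2 : Z.gcd m (n*n) = 1) by (apply gcd1_mul_r; auto).
  assert (HgRS : Z.gcd R S = 1).
  { apply gcd1_intro. intros g H1 H2. apply (gcd1_div _ _ _ Hmn2).
    - replace m with (R + S) by (unfold R, S; lia). apply Z.divide_add_r; auto.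
    - replace (n*n) with ((R+S)*(R+S) - (R-S)*(R-S)).
      + apply Z.divide_sub_r; apply Z.divide_mul_l.
        apply Z.divide_add_r; auto. apply Z.divide_sub_r; auto.
      + replace (R+S) with m by (unfold R, S; lia). replace (R-S) with x by (unfold R,S; lia). lia. }
  destruct (sq_of_coprime R S (2*(c*c)) ltac:(lia) ltac:(lia) HgRS HRS) as [e [He0 He]].
  destruct (sq_of_coprime S R (2*(c*c)) ltac:(lia) ltac:(lia) (gcd1_sym _ _ HgRS)
     ltac:(rewrite Z.mul_comm; exact HRS)) as [f [Hf0 Hf]].
  assert (Hef : e*f = 2*(c*c)).
  { apply sq_inj. apply Z.mul_nonneg_nonneg; auto.
    apply Z.mul_nonneg_nonneg; [lia|apply Z.square_nonneg].
    rewrite <- HRS, He, Hf. ring. }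
  assert (Hgef : Z.gcd e f = 1).
  { apply gcd1_intro. intros g H1 H2. apply (gcd1_div _ _ _ HgRS).
    rewrite He; apply Z.divide_mul_l; auto. rewrite Hf; apply Z.divide_mul_l; auto. }
  assert (HaR : a*a = R + S) by (rewrite <- Ha; unfold R, S; lia).
  assert (Haz : a < z).
  { assert (Ha1 : 0 < a) by (destruct (Z.eq_dec a 0); subst; lia).
    assert (a <= a*a) by (rewrite <- (Z.mul_1_r a) at 1; apply Z.mul_le_mono_nonneg_l; lia).
    assert (m <= m*m) by (rewrite <- (Z.mul_1_r m) at 1; apply Z.mul_le_mono_nonneg_l; lia).
    assert (P < z) by (unfold P, Q in *; lia). lia. }
  assert (He1 : 0 < e) by (destruct (Z.eq_dec e 0); subst; lia).
  assert (Hf1 : 0 < f) by (destruct (Z.eq_dec f 0); subst; lia).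
  destruct (Z.Even_or_Odd e) as [[e' He']|Heo].
  - subst e. assert (Hc2 : e' * f = c * c) by lia.
    assert (Hg2 : Z.gcd e' f = 1).
    { apply gcd1_intro. intros g H1 H2. apply (gcd1_div _ _ _ Hgef); auto.
      apply Z.divide_mul_r; auto. }
    destruct (sq_of_coprime e' f c ltac:(lia) ltac:(lia) Hg2 Hc2) as [g [Hg0 Hgg]].
    destruct (sq_of_coprime f e' c ltac:(lia) ltac:(lia) (gcd1_sym _ _ Hg2) ltac:(lia)) as [h [Hh0 Hhh]].
    exists h, g, a. split; [|exact Haz]. repeat split.
    + destruct (Z.eq_dec h 0); subst; lia.
    + destruct (Z.eq_dec g 0); subst; lia.
    + lia.
    + rewrite HaR, He, Hf, Hgg, Hhh. ring.
  - destruct (Z.Even_or_Odd f) as [[f' Hf']|Hfo].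
    + subst f. assert (Hc2 : e * f' = c * c) by lia.
      assert (Hg2 : Z.gcd e f' = 1).
      { apply gcd1_intro. intros g H1 H2. apply (gcd1_div _ _ _ Hgef); auto.
        apply Z.divide_mul_r; auto. }
      destruct (sq_of_coprime e f' c ltac:(lia) ltac:(lia) Hg2 Hc2) as [g [Hg0 Hgg]].
      destruct (sq_of_coprime f' e c ltac:(lia) ltac:(lia) (gcd1_sym _ _ Hg2) ltac:(lia)) as [h [Hh0 Hhh]].
      exists g, h, a. split; [|exact Haz]. repeat split.
      * destruct (Z.eq_dec g 0); subst; lia.
      * destruct (Z.eq_dec h 0); subst; lia.
      * lia.
      * rewrite HaR, He, Hf, Hgg, Hhh. ring.
    + exfalso. destruct Heo as [i Hi], Hfo as [j Hj]. apply (par3 i j (c*c)).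
      rewrite <- Hi, <- Hj. lia.
Qed.

Lemma step x y z : sol x y z -> exists x' y' z', sol x' y' z' /\ z' < z.
Proof.
  intros Hs. pose proof Hs as [Hx [Hy [Hz E]]].
  assert (Hzp : 0 < z) by (destruct (Z.eq_dec z 0); subst; nia).
  set (g := Z.gcd x y).
  assert (Hg0 : 0 <= g) by apply Z.gcd_nonneg.
  assert (Hgn : g <> 0) by (intro H0; apply Z.gcd_eq_0_l in H0; lia).
  destruct (Z.eq_dec g 1) as [Hg1|Hg1].
  - destruct (Z.Even_or_Odd x) as [[x' Hx']|Ho]; [|exact (step_odd x y z Hs Hg1 Ho)].
    assert (Hze : Z.Even z).
    { apply even_sq. exists (8*(x'*x'*(x'*x')) + 2*(y*y*(y*y))). rewrite <- E, Hx'. ring. }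
    destruct Hze as [z' Hz'].
    exists y, x', z'. split; [|lia]. repeat split; try lia.
  - destruct (Z.gcd_divide_l x y) as [x' Hx']. destruct (Z.gcd_divide_r x y) as [y' Hy'].
    fold g in Hx', Hy'.
    assert (Hdiv : (g*g | z)).
    { apply sq_div. nia. exists (x'*x'*(x'*x') + 4*(y'*y'*(y'*y'))).
      rewrite <- E, Hx', Hy'. ring. }
    destruct Hdiv as [k Hk].
    exists x', y', k. split.
    + repeat split; try nia.
    + assert (2 <= g) by lia. assert (0 < k) by nia. assert (4 <= g*g) by nia. nia.
Qed.

Lemma no_sol x y z : sol x y z -> False.
Proof.
  intros H. assert (Hz : 0 <= z) by (destruct H as [_ [_ [? _]]]; auto).
  revert x y H. pattern z. apply Z_lt_induction; [|exact Hz].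
  intros z0 IH x y Hs. destruct (step _ _ _ Hs) as [x' [y' [z' [Hs' Hlt]]]].
  apply (IH z' (conj (proj1 (proj2 (proj2 Hs'))) Hlt) x' y' Hs').
Qed.
Local Open Scope R_scope.

Lemma no_sqrt2 : forall d, (0 <= d)%Z -> forall c, (2*(c*c) = d*d)%Z -> d = 0%Z.
Proof.
  intros d Hd. generalize Hd. pattern d. apply Z_lt_induction; [|exact Hd].
  intros d0 IH Hd0 c H.
  assert (He : Z.Even d0) by (apply even_sq; exists (c*c)%Z; lia).
  destruct He as [d' Hd']. subst d0.
  assert (Hc : Z.Even c) by (apply even_sq; exists (d'*d')%Z; lia).
  destruct Hc as [c' Hc']. subst c.
  destruct (Z.eq_dec d' 0) as [->|Hn]; [lia|].
  assert (d' = 0%Z) by (apply (IH d' ltac:(lia) ltac:(lia) c'); lia). lia.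
Qed.


Lemma abs_sq (a : Z) : (Z.abs a * Z.abs a = a * a)%Z.
Proof. destruct (Z.abs_spec a) as [[_ ->]|[_ ->]]; ring. Qed.

Lemma key_int (s r1 r2 : R) (N1 D1 N2 D2 : Z) : (0 < D1)%Z -> (0 < D2)%Z ->
  IZR N1 = r1 * IZR D1 -> IZR N2 = r2 * IZR D2 ->
  r1 * r1 = 1/4 + s*s -> r2 * r2 = 1/4 + (s-1)*(s-1) -> False.
Proof.
  intros HD1 HD2 HN1 HN2 H1 H2.
  assert (Hrel : (r1*r1 - r2*r2)^4 + 4 = 16*(r1*r1)*(r2*r2)).
  { rewrite H1, H2. field. }
  set (A := (N1*N1*(D2*D2) - N2*N2*(D1*D1))%Z).
  set (B := (D1*D1*(D2*D2))%Z).
  set (Zz := (4*N1*N2*(D1*D1*D1)*(D2*D2*D2))%Z).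
  assert (E : (A*A*(A*A) + 4*(B*B*(B*B)) = Zz*Zz)%Z).
  { apply eq_IZR. unfold A, B, Zz.
    repeat rewrite ?plus_IZR, ?minus_IZR, ?mult_IZR.
    rewrite HN1, HN2.
    set (a := IZR D1). set (b := IZR D2).
    transitivity ((a*b)^8 * ((r1*r1 - r2*r2)^4 + 4)); [ring|].
    rewrite Hrel. ring. }
  destruct (Z.eq_dec A 0) as [HA|HA].
  - assert (Hd1 : IZR D1 > 0) by (apply IZR_lt; lia).
    assert (Hd2 : IZR D2 > 0) by (apply IZR_lt; lia).
    assert (HR : r1*r1 = r2*r2).
    { assert (IZR A = 0) by (rewrite HA; reflexivity).
      unfold A in H. repeat rewrite ?plus_IZR, ?minus_IZR, ?mult_IZR in H.
      rewrite HN1, HN2 in H.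
      assert (Hab : (IZR D1 * IZR D2)^2 * (r1*r1 - r2*r2) = 0) by (rewrite <- H; ring).
      apply Rmult_integral in Hab. destruct Hab as [Hab|Hab].
      - exfalso. assert (0 < (IZR D1 * IZR D2)^2) by (apply pow_lt; nra). lra.
      - lra. }
    assert (Hs : 2*s - 1 = r1*r1 - r2*r2) by (rewrite H1, H2; ring).
    assert (Hr : r1 * r1 = 1/2) by (rewrite H1; nra).
    assert (E2 : (2*(N1*N1) = D1*D1)%Z).
    { apply eq_IZR. repeat rewrite ?mult_IZR. rewrite HN1.
      transitivity (2*(r1*r1)*(IZR D1 * IZR D1)); [ring|]. rewrite Hr. simpl. field. }
    assert (D1 = 0%Z) by (apply (no_sqrt2 D1 ltac:(lia) N1); exact E2). lia.
  - apply (no_sol (Z.abs A) B (Z.abs Zz)).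
    unfold sol. repeat split.
    + lia.
    + unfold B. nia.
    + lia.
    + rewrite !abs_sq. exact E.
Qed.

Lemma key_Q (s : R) (q1 q2 : Q) :
  Q2R q1 * Q2R q1 = 1/4 + s*s -> Q2R q2 * Q2R q2 = 1/4 + (s-1)*(s-1) -> False.
Proof.
  intros H1 H2.
  assert (Hp : forall q : Q, (0 < QDen q)%Z) by (intros; reflexivity).
  assert (HN : forall q : Q, IZR (Qnum q) = Q2R q * IZR (QDen q)).
  { intros q. unfold Q2R. field. apply not_0_IZR. specialize (Hp q). lia. }
  exact (key_int s (Q2R q1) (Q2R q2) _ _ _ _ (Hp q1) (Hp q2) (HN q1) (HN q2) H1 H2).
Qed.

Lemma rat_sq (E : R) : 0 <= E -> is_rational (sqrt E) -> exists q, Q2R q * Q2R q = E.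
Proof. intros HE [q Hq]. exists q. rewrite Hq. apply sqrt_sqrt; auto. Qed.

Theorem theorem2 :
  ~ exists P : R * R,
      on_midline P /\
      is_rational (dist2 P (0, 0)) /\
      is_rational (dist2 P (1, 0)) /\
      is_rational (dist2 P (1, 1)) /\
      is_rational (dist2 P (0, 1)).
Proof.
  intros [[px py] [Hm [H1 [H2 [H3 H4]]]]].
  unfold dist2, on_midline in *; simpl in *.
  destruct Hm as [[Hx _]|[Hy _]].
  - rewrite Hx in *.
    apply rat_sq in H1; [|apply Rplus_le_le_0_compat; apply pow2_ge_0]. apply rat_sq in H4; [|apply Rplus_le_le_0_compat; apply pow2_ge_0].
    destruct H1 as [q1 Hq1], H4 as [q2 Hq2].
    apply (key_Q py q1 q2).
    + rewrite Hq1. field.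
    + rewrite Hq2. field.
  - rewrite Hy in *.
    apply rat_sq in H1; [|apply Rplus_le_le_0_compat; apply pow2_ge_0]. apply rat_sq in H2; [|apply Rplus_le_le_0_compat; apply pow2_ge_0].
    destruct H1 as [q1 Hq1], H2 as [q2 Hq2].
    apply (key_Q px q1 q2).
    + rewrite Hq1. field.
    + rewrite Hq2. field.
Qed.
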